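(* The bidirected quarter-grid, the ascending cyclically directed quarter-grid, the descending cyclically directed quarter-grid, and every complete ray digraph each have precisely one end.
   Context: A ray is an orientation of a one-way infinite path with every edge oriented towards infinity; an anti-ray is one with every edge oriented away from infinity; a dipath is a directed path. For rays or anti-rays $Q,R$ write $Q\le R$ if there are infinitely many pairwise disjoint $Q$--$R$ dipaths, and $Q\sim R$ if $Q\le R$ and $R\le Q$; the ends of a digraph are the equivalence classes of $\sim$ on its rays and anti-rays. In all following definitions start with infinitely many pairwise disjoint rays $R_i=x^i_1x^i_2\ldots$ ($i\ge1$). Bidirected quarter-grid: add the edges $x^i_{4j+7}x^{i+1}_{4j+1}$ and $x^{i+1}_{4j+2}x^i_{4j+8}$ for all $j\ge 0$, $i\ge 1$, then suppress every vertex $v\in V(R_i)$ with $d^-(v)=d^+(v)=1$ all of whose neighbours lie on $R_i$. Ascending cyclically directed quarter-grid: add the edges $x^1_jx^2_j$ for all odd $j$, $x^i_{j+3}x^{i+1}_j$ for all $i\ge2$ and all odd $j$, and $x^i_2x^1_{2(i-1)}$ for all $i\ge 2$. Descending cyclically directed quarter-grid: add the edges $x^{i+1}_jx^i_{j+1}$ for all even $j$ and all $i\ge1$, and $x^1_{2i}x^{i+1}_1$ for all $i\ge 1$. Complete ray digraph: the union of the rays $R_i$ together with, for every two distinct $i,i'$, infinitely many disjoint $R_i$--$R_{i'}$ dipaths and infinitely many disjoint $R_{i'}$--$R_i$ dipaths, such that none of these dipaths meets any ray $R_j$ other than its two end rays, all these additional dipaths are pairwise disjoint, and the starting vertex of each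 $R_i$ is the end vertex of an $R_1$--$R_i$ dipath. *)

(* Defs.v *)
From Stdlib Require Import List Arith.
Import ListNotations.

Record digraph := Digraph {
  vtype : Type;
  vx    : vtype -> Prop;
  arc   : vtype -> vtype -> Prop
}.

Section Notions.
Variable D : digraph.
Local Notation V := (vtype D).

Definition is_ray (r : nat -> V) : Prop :=
  (forall n, vx D (r n)) /\
  (forall m n, r m = r n -> m = n) /\
  (forall n, arc D (r n) (r (S n))).

Definition is_antiray (r : nat -> V) : Prop :=
  (forall n, vx D (r n)) /\
  (forall m n, r m = r n -> m = n) /\
  (forall n, arc D (r (S n)) (r n)).

Definition ray_or_antiray (r : nat -> V) : Prop := is_ray r \/ is_antiray r.

Definition on (r : nat -> V) (v : V) : Prop := exists n, r n = v.

Fixpoint chain (l : list V) : Prop :=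
  match l with
  | x :: ((y :: _) as t) => arc D x y /\ chain t
  | _ => True
  end.

Definition is_dipath (p : list V) : Prop :=
  p <> [] /\ NoDup p /\ (forall v, In v p -> vx D v) /\ chain p.

Definition AB_dipath (A B : V -> Prop) (p : list V) : Prop :=
  is_dipath p /\
  (exists x l, p = x :: l /\ A x /\ forall v, In v p -> A v -> v = x) /\
  (exists l y, p = l ++ [y] /\ B y /\ forall v, In v p -> B v -> v = y).

Definition disjoint_paths (p q : list V) : Prop :=
  forall v, In v p -> ~ In v q.

Definition ray_le (Q R : nat -> V) : Prop :=
  exists f : nat -> list V,
    (forall n, AB_dipath (on Q) (on R) (f n)) /\
    (forall m n, m <> n -> disjoint_paths (f m) (f n)).

Definition ray_equiv (Q R : nat -> V) : Prop := ray_le Q R /\ ray_le R Q.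

Definition has_exactly_one_end : Prop :=
  (exists r, ray_or_antiray r) /\
  (forall Q R, ray_or_antiray Q -> ray_or_antiray R -> ray_equiv Q R).

End Notions.

(* Quarter-grid constructions.  The vertex x^i_j (i, j >= 1) of the ray
   R_i = x^i_1 x^i_2 ... is represented by the pair (i, j) : nat * nat. *)

Definition qvx (v : nat * nat) : Prop := 1 <= fst v /\ 1 <= snd v.

Definition ray_edge (u w : nat * nat) : Prop :=
  fst w = fst u /\ snd w = S (snd u).

Definition suppressible (E : nat * nat -> nat * nat -> Prop) (v : nat * nat) : Prop :=
  qvx v /\
  (exists u, E u v /\ forall u', E u' v -> u' = u) /\
  (exists w, E v w /\ forall w', E v w' -> w' = w) /\
  (forall u, E u v \/ E v u -> fst u = fst v).

Inductive supp_walk (E : nat * nat -> nat * nat -> Prop) : nat * nat -> nat * nat -> Prop :=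
  | sw_one : forall u w, E u w -> supp_walk E u w
  | sw_step : forall u v w, E u v -> suppressible E v -> supp_walk E v w -> supp_walk E u w.

(* The digraph obtained by suppressing every suppressible vertex: the
   suppressible vertices are removed, and each maximal chain
   u -> v1 -> ... -> v(k-1) -> w through removed vertices becomes an edge u -> w. *)
Definition suppress (E : nat * nat -> nat * nat -> Prop) : digraph :=
  {| vtype := nat * nat;
     vx := fun v => qvx v /\ ~ suppressible E v;
     arc := fun u w => (qvx u /\ ~ suppressible E u) /\ (qvx w /\ ~ suppressible E w)
                       /\ supp_walk E u w |}.

Definition bqg_pre_edge (u w : nat * nat) : Prop :=
  qvx u /\ qvx w /\
  (ray_edge u w \/
   (exists i j, 1 <= i /\ u = (i, 4*j+7) /\ w = (i+1, 4*j+1)) \/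
   (exists i j, 1 <= i /\ u = (i+1, 4*j+2) /\ w = (i, 4*j+8))).

Definition bidirected_quarter_grid : digraph := suppress bqg_pre_edge.

Definition odd_nat (j : nat) : Prop := exists k, j = 2*k+1.
Definition even_nat (j : nat) : Prop := exists k, j = 2*k.

Definition ascending_cdqg : digraph :=
  {| vtype := nat * nat;
     vx := qvx;
     arc := fun u w => qvx u /\ qvx w /\
       (ray_edge u w \/
        (exists j, odd_nat j /\ u = (1, j) /\ w = (2, j)) \/
        (exists i j, 2 <= i /\ odd_nat j /\ u = (i, j+3) /\ w = (i+1, j)) \/
        (exists i, 2 <= i /\ u = (i, 2) /\ w = (1, 2*(i-1)))) |}.

Definition descending_cdqg : digraph :=
  {| vtype := nat * nat;
     vx := qvx;
     arc := fun u w => qvx u /\ qvx w /\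
       (ray_edge u w \/
        (exists i j, 1 <= i /\ even_nat j /\ u = (i+1, j) /\ w = (i, j+1)) \/
        (exists i, 1 <= i /\ u = (1, 2*i) /\ w = (i+1, 1))) |}.

(* Complete ray digraphs.  Rays are indexed from 0: R 0 plays the role of
   R_1 of the paper.  The set of additional dipaths is the predicate P. *)
Definition is_complete_ray_digraph (D : digraph) : Prop :=
  exists (R : nat -> nat -> vtype D) (P : list (vtype D) -> Prop),
    (forall i, is_ray D (R i)) /\
    (forall i j m n, i <> j -> R i m <> R j n) /\
    (forall p, P p -> exists i i', i <> i' /\
        AB_dipath D (on D (R i)) (on D (R i')) p /\
        (forall j v, j <> i -> j <> i' -> In v p -> ~ on D (R j) v)) /\
    (forall p q, P p -> P q -> p <> q -> disjoint_paths D p q) /\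
    (forall i i', i <> i' -> exists f : nat -> list (vtype D),
        (forall n, P (f n) /\ AB_dipath D (on D (R i)) (on D (R i')) (f n)) /\
        (forall m n, f m = f n -> m = n)) /\
    (forall i, i <> 0 -> exists p l, P p /\
        AB_dipath D (on D (R 0)) (on D (R i)) p /\ p = l ++ [R i 0]) /\
    (forall v, vx D v -> (exists i n, R i n = v) \/ (exists p, P p /\ In v p)) /\
    (forall u w, arc D u w ->
        (exists i n, u = R i n /\ w = R i (S n)) \/
        (exists p l1 l2, P p /\ p = l1 ++ u :: w :: l2)).

(* Main.v *)
Require Import Defs.
From Stdlib Require Import List Arith Lia Classical ClassicalEpsilon Relations.
Import ListNotations.

Section Gen.
Variable D : digraph.
Local Notation V := (vtype D).

Definition stepS (S : V -> Prop) (x y : V) := arc D x y /\ vx D y /\ S y.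
Definition reachS S u w := clos_refl_trans V (stepS S) u w.
Definition lastof (p : list V) y := exists l, p = l ++ [y].

Lemma lastof_app a v c y : lastof (v :: c) y -> lastof (a ++ v :: c) y.
Proof. intros [l Hl]. exists (a ++ l). rewrite Hl, app_assoc. reflexivity. Qed.

Lemma lastof_app_inv a v c y : lastof (a ++ v :: c) y -> lastof (v :: c) y.
Proof.
  intros [l Hl]. destruct c as [|z c] using rev_ind.
  - apply app_inj_tail in Hl. destruct Hl as [_ ->]. exists []. reflexivity.
  - clear IHc. rewrite app_comm_cons, app_assoc in Hl. apply app_inj_tail in Hl.
    destruct Hl as [_ ->]. exists (v :: c). reflexivity.
Qed.

Lemma chain_split a v c : chain D (a ++ v :: c) <-> chain D (a ++ [v]) /\ chain D (v :: c).
Proof.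
  induction a as [|x a IH]; simpl.
  - tauto.
  - destruct a as [|y a]; simpl in *.
    + tauto.
    + rewrite IH. tauto.
Qed.

Definition W (A B S : V -> Prop) (p : list V) :=
  chain D p /\ (forall v, In v p -> vx D v /\ S v) /\
  (exists x l, p = x :: l /\ A x) /\ (exists y, lastof p y /\ B y).

Lemma min_ex (Pr : list V -> Prop) :
  (exists p, Pr p) -> exists p, Pr p /\ forall q, Pr q -> length p <= length q.
Proof.
  intros [p Hp]. remember (length p) as n. revert p Hp Heqn.
  induction n as [n IH] using lt_wf_ind. intros p Hp Hn.
  destruct (classic (exists q, Pr q /\ length q < n)) as [[q [Hq Hl]]|Hno].
  - exact (IH (length q) Hl q Hq eq_refl).
  - exists p. split; auto. intros q Hq.
    destruct (le_lt_dec (length p) (length q)); auto. exfalso. apply Hno. exists q. split; auto. lia.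
Qed.

Lemma not_NoDup_split (l : list V) : ~ NoDup l -> exists a v b c, l = a ++ v :: b ++ v :: c.
Proof.
  induction l as [|x l IH]; intros H.
  - exfalso. apply H. constructor.
  - destruct (classic (In x l)) as [Hin|Hn].
    + apply in_split in Hin. destruct Hin as [b [c ->]]. exists [], x, b, c. reflexivity.
    + destruct IH as [a [v [b [c ->]]]].
      * intro Hd. apply H. constructor; auto.
      * exists (x :: a), v, b, c. reflexivity.
Qed.

Lemma W_min_dipath A B S p : W A B S p -> (forall q, W A B S q -> length p <= length q) ->
  AB_dipath D A B p /\ forall v, In v p -> S v.
Proof.
  intros [Hc [Hall [[x [l [Hp HA]]] [y [[l' Hl'] HB]]]]] Hmin.
  split; [|intros v Hv; apply (Hall v Hv)].
  split; [split; [|split; [|split]]|split].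
  - rewrite Hp. discriminate.
  - apply NNPP. intro Hnd. apply not_NoDup_split in Hnd. destruct Hnd as [a [v [b [c Habc]]]].
    assert (HW : W A B S (a ++ v :: c)).
    { rewrite Habc in Hc. apply chain_split in Hc. destruct Hc as [Hc1 Hc2].
      change (v :: b ++ v :: c) with ((v :: b) ++ v :: c) in Hc2.
      apply chain_split in Hc2. destruct Hc2 as [_ Hc2].
      split; [apply chain_split; tauto|split; [|split]].
      - intros w Hw. apply Hall. rewrite Habc. apply in_app_or in Hw. apply in_or_app.
        destruct Hw as [Hw|[Hw|Hw]]; [left; auto|right; left; auto|right; right; apply in_or_app; right; right; auto].
      - destruct a as [|z a]; simpl in *.
        + exists v, c. split; auto. rewrite Hp in Habc. inversion Habc. subst. auto.
        + exists z, (a ++ v :: c). split; auto. rewrite Hp in Habc. inversion Habc. subst. auto.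
      - exists y. split; auto. apply lastof_app.
        assert (H1 : lastof (a ++ v :: b ++ v :: c) y) by (rewrite <- Habc; exists l'; auto).
        apply lastof_app_inv in H1. change (v :: b ++ v :: c) with ((v :: b) ++ v :: c) in H1.
        apply lastof_app_inv in H1. auto. }
    apply Hmin in HW. rewrite Habc in HW. rewrite !length_app in HW. simpl in HW.
    rewrite length_app in HW. simpl in HW. lia.
  - intros v Hv. apply (Hall v Hv).
  - exact Hc.
  - exists x, l. split; auto. split; auto. intros v Hv HAv.
    apply in_split in Hv. destruct Hv as [a [c Hac]].
    destruct a as [|z a].
    + rewrite Hp in Hac. inversion Hac. auto.
    + exfalso. assert (HW : W A B S (v :: c)).
      { rewrite Hac in Hc. apply chain_split in Hc. split; [tauto|split; [|split]].
        - intros w Hw. apply Hall. rewrite Hac. apply in_or_app. right. auto.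
        - exists v, c. auto.
        - exists y. split; auto. apply (lastof_app_inv (z :: a)). rewrite <- Hac. exists l'. auto. }
      apply Hmin in HW. rewrite Hac in HW. simpl in HW. rewrite length_app in HW. simpl in HW. lia.
  - exists l', y. split; auto. split; auto. intros v Hv HBv.
    apply in_split in Hv. destruct Hv as [a [c Hac]].
    destruct c as [|z c].
    + rewrite Hl' in Hac. apply app_inj_tail in Hac. destruct Hac as [_ Hac]. auto.
    + exfalso. assert (HW : W A B S (a ++ [v])).
      { rewrite Hac in Hc. apply chain_split in Hc. split; [tauto|split; [|split]].
        - intros w Hw. apply Hall. rewrite Hac. apply in_app_or in Hw. apply in_or_app.
          destruct Hw as [Hw|[Hw|[]]]; [left; auto|right; left; auto].
        - destruct a as [|w a]; simpl in *.
          + exists v, []. split; auto. rewrite Hp in Hac. inversion Hac. subst. auto.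
          + exists w, (a ++ [v]). split; auto. rewrite Hp in Hac. inversion Hac. subst. auto.
        - exists v. split; auto. exists a. auto. }
      apply Hmin in HW. rewrite Hac in HW. rewrite !length_app in HW. simpl in HW. lia.
Qed.

Lemma reach_walk S u w : reachS S u w -> vx D u -> S u ->
  exists l, chain D (u :: l) /\ (forall v, In v (u :: l) -> vx D v /\ S v) /\ lastof (u :: l) w.
Proof.
  intros H. apply clos_rt_rt1n in H. induction H as [u|u y w [Ha [Hvy HSy]] _ IH]; intros Hvu HSu.
  - exists []. split; [simpl; auto|split].
    + intros v [<-|[]]; auto.
    + exists []. reflexivity.
  - destruct (IH Hvy HSy) as [l [Hc [Hall [l' Hl']]]].
    exists (y :: l). split; [split; auto|split].
    + intros v [<-|Hv]; auto.
    + exists (u :: l'). rewrite Hl'. reflexivity.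
Qed.

Lemma reach_dipath A B S u w : reachS S u w -> vx D u -> S u -> A u -> B w ->
  exists p, AB_dipath D A B p /\ forall v, In v p -> S v.
Proof.
  intros H Hv HS HA HB. destruct (reach_walk S u w H Hv HS) as [l [Hc [Hall Hl]]].
  destruct (min_ex (W A B S)) as [p [Hp Hmin]].
  - exists (u :: l). split; auto. split; auto. split; eauto.
  - exists p. apply W_min_dipath; auto.
Qed.

Lemma reach_mono (S S' : V -> Prop) u w : (forall v, S v -> S' v) -> reachS S u w -> reachS S' u w.
Proof.
  intros HS H. induction H as [x y [Ha [Hv Hs]]| |]; [apply rt_step; repeat split; auto| apply rt_refl| eapply rt_trans; eauto].
Qed.

Lemma chain_reach S l x y : chain D (x :: l) -> (forall v, In v (x :: l) -> vx D v /\ S v) ->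
  lastof (x :: l) y -> reachS S x y.
Proof.
  revert x. induction l as [|z l IH]; intros x Hc Hall Hl.
  - destruct Hl as [l' Hl']. destruct l' as [|a l']; simpl in Hl'.
    + inversion Hl'. apply rt_refl.
    + inversion Hl'. destruct l'; simpl in *; discriminate.
  - destruct Hc as [Ha Hc]. eapply rt_trans.
    + apply rt_step. split; [exact Ha|]. apply Hall. simpl; auto.
    + apply IH; [exact Hc| intros v Hv; apply Hall; simpl; auto|].
      * destruct Hl as [l' Hl']. destruct l' as [|a l']; simpl in Hl'; inversion Hl'.
        exists l'. auto.
Qed.

Lemma le_of_avoid X Y :
  (forall F : list V, exists p, AB_dipath D (on D X) (on D Y) p /\ forall v, In v p -> ~ In v F) ->
  ray_le D X Y.
Proof.
  intros H.
  pose (g := fun F => proj1_sig (constructive_indefinite_description _ (H F))).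
  assert (Hg : forall F, AB_dipath D (on D X) (on D Y) (g F) /\ forall v, In v (g F) -> ~ In v F).
  { intros F. unfold g. destruct (constructive_indefinite_description _ (H F)) as [p Hp]. exact Hp. }
  pose (h := fix h n := match n with O => [] | S k => h k ++ g (h k) end).
  exists (fun n => g (h n)). split.
  - intros n. apply Hg.
  - assert (Hsub : forall m n v, m < n -> In v (g (h m)) -> In v (h n)).
    { intros m n v Hmn Hv. induction n as [|n IHn]; [lia|]. simpl. apply in_or_app.
      destruct (Nat.eq_dec m n) as [->|Hne]; [right; auto|left; apply IHn; lia]. }
    intros m n Hmn v Hv Hv'.
    destruct (lt_dec m n) as [Hlt|Hge].
    + apply (proj2 (Hg (h n)) v Hv'). apply (Hsub m); auto.
    + apply (proj2 (Hg (h m)) v Hv). apply (Hsub n); auto. lia.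
Qed.

Lemma le_of_reach X Y :
  (forall F : list V, exists u w, on D X u /\ on D Y w /\ vx D u /\ ~ In u F /\
      reachS (fun v => ~ In v F) u w) -> ray_le D X Y.
Proof.
  intros H. apply le_of_avoid. intros F. destruct (H F) as [u [w [HX [HY [Hv [Hu Hr]]]]]].
  eapply reach_dipath; eauto.
Qed.

Lemma map_inj_NoDup {A} (f : nat -> A) l : (forall a b, f a = f b -> a = b) -> NoDup l -> NoDup (map f l).
Proof.
  intros Hi Hn. induction Hn; simpl; constructor; auto.
  intro Hin. apply in_map_iff in Hin. destruct Hin as [y [Hy Hy']]. apply Hi in Hy. subst. auto.
Qed.

Lemma bound_list (l : list nat) : exists b, forall t, In t l -> t < b.
Proof.
  induction l as [|a l [b Hb]]. exists 0. intros t [].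
  exists (S (max a b)). intros t [<-|Ht]; [lia|]. apply Hb in Ht. lia.
Qed.

Lemma inf_avoid {A} (X : nat -> A) (Pr : A -> Prop) : (forall a b, X a = X b -> a = b) ->
  (forall t, exists t', t <= t' /\ Pr (X t')) -> forall L, exists t, Pr (X t) /\ ~ In (X t) L.
Proof.
  intros Hi Hinf L. apply NNPP. intro Hno.
  assert (Hk : forall k, exists l, NoDup l /\ length l = k /\ forall t, In t l -> Pr (X t)).
  { induction k as [|k [l [Hn [Hl Hp]]]].
    - exists []. split; [constructor|split; auto]. intros t [].
    - destruct (bound_list l) as [b Hb]. destruct (Hinf b) as [t' [Ht' Hp']].
      exists (t' :: l). split; [constructor; auto|split; [simpl; auto|]].
      + intro Hin. apply Hb in Hin. lia.
      + intros t [<-|Ht]; auto. }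
  destruct (Hk (S (length L))) as [l [Hn [Hl Hp]]].
  assert (Hle : length (map X l) <= length L).
  { apply NoDup_incl_length. apply map_inj_NoDup; auto.
    intros a Ha. apply in_map_iff in Ha. destruct Ha as [t [<- Ht]].
    apply NNPP. intro Hn'. apply Hno. exists t. split; auto. }
  rewrite length_map in Hle. lia.
Qed.

Lemma inj_avoid {A} (X : nat -> A) : (forall a b, X a = X b -> a = b) ->
  forall L, exists t, ~ In (X t) L.
Proof.
  intros Hi L. destruct (inf_avoid X (fun _ => True) Hi) with (L := L) as [t [_ Ht]].
  - intros t. exists t. auto.
  - eauto.
Qed.

Lemma pig {A} (X : nat -> A) L t : (forall a b, X a = X b -> a = b) ->
  (forall k, In (X (t + k)) L) -> False.
Proof.
  intros Hi H. destruct (inj_avoid (fun k => X (t + k))) with (L := L) as [k Hk].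
  - intros a b Hab. apply Hi in Hab. lia.
  - apply Hk, H.
Qed.

Lemma no_antiray (phi : V -> nat) :
  (forall u w, arc D u w -> phi u <= phi w) ->
  (forall K, exists L, forall v, vx D v -> phi v <= K -> In v L) ->
  forall r, ~ is_antiray D r.
Proof.
  intros Hm Hf r [Hv [Hi Ha]].
  assert (Hb : forall n, phi (r n) <= phi (r 0)).
  { induction n; auto. specialize (Ha n). apply Hm in Ha. lia. }
  destruct (Hf (phi (r 0))) as [L HL].
  destruct (inj_avoid r Hi L) as [t Ht]. apply Ht, HL; auto.
Qed.

End Gen.


Definition P2 := (nat * nat)%type.
Definition reachR (E : P2 -> P2 -> Prop) (S : P2 -> Prop) u w :=
  clos_refl_trans P2 (fun x y => E x y /\ S y) u w.
Definition out N (v : P2) := N < fst v \/ N < snd v.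

Definition box N : list P2 :=
  flat_map (fun a => map (fun b => (a, b)) (seq 0 (S N))) (seq 0 (S N)).

Lemma box_in N a b : a <= N -> b <= N -> In (a, b) (box N).
Proof.
  intros Ha Hb. unfold box. apply in_flat_map. exists a. split.
  - apply in_seq. lia.
  - apply in_map. apply in_seq. lia.
Qed.

Lemma F_bound (F : list P2) : exists N, 1 <= N /\ forall v, In v F -> ~ out N v.
Proof.
  induction F as [|[a b] F [N [HN HF]]].
  - exists 1. split; [auto|]. intros v [].
  - exists (S (max N (max a b))). split; [lia|]. intros v [<-|Hv].
    + unfold out; simpl; lia.
    + apply HF in Hv. unfold out in *. lia.
Qed.

Lemma ray_far (X : nat -> P2) N : (forall a b, X a = X b -> a = b) -> exists t, out N (X t).
Proof.
  intros Hi. destruct (inj_avoid X Hi (box N)) as [t Ht]. exists t.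
  destruct (X t) as [a b] eqn:E. unfold out; simpl.
  destruct (le_lt_dec a N); [|auto]. destruct (le_lt_dec b N); [|auto].
  exfalso. apply Ht. apply box_in; auto.
Qed.

Lemma row_fwd E Sx (Hrow : forall r x, 1 <= r -> 1 <= x -> E (r, x) (r, S x)) r c c' :
  1 <= r -> 1 <= c -> c <= c' -> (forall x, c < x <= c' -> Sx (r, x)) -> reachR E Sx (r, c) (r, c').
Proof.
  intros Hr Hc Hle HS. induction Hle as [|c' Hle IH].
  - apply rt_refl.
  - eapply rt_trans; [apply IH; intros; apply HS; lia|]. apply rt_step. split.
    + apply Hrow; lia.
    + apply HS; lia.
Qed.

Lemma grid_le (Vx : P2 -> Prop) (A E : P2 -> P2 -> Prop)
  (conv : forall Sx u w, reachR E Sx u w -> Vx u -> Vx w -> reachS (Digraph P2 Vx A) Sx u w)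
  (Hvq : forall v, Vx v -> qvx v)
  (stepA : forall N, 1 <= N -> forall r c, qvx (r, c) -> out N (r, c) ->
       exists C, N < C /\ reachR E (out N) (r, c) (1, C))
  (stepB : forall N C, 1 <= N -> N < C -> exists H, forall r c, qvx (r, c) -> out H (r, c) ->
       reachR E (out N) (1, C) (r, c)) :
  forall Q R, is_ray (Digraph P2 Vx A) Q -> is_ray (Digraph P2 Vx A) R -> ray_le (Digraph P2 Vx A) Q R.
Proof.
  intros Q R [HQv [HQi _]] [HRv [HRi _]]. apply le_of_reach. intros F.
  destruct (F_bound F) as [N [HN HF]].
  destruct (ray_far Q N HQi) as [t Ht].
  destruct (Q t) as [r c] eqn:EQ.
  assert (Hq : qvx (r, c)) by (rewrite <- EQ; apply Hvq, HQv).
  destruct (stepA N HN r c Hq Ht) as [C [HC HA]].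
  destruct (stepB N C HN HC) as [H HB].
  destruct (ray_far R H HRi) as [t' Ht'].
  destruct (R t') as [r' c'] eqn:ER.
  assert (Hw : qvx (r', c')) by (rewrite <- ER; apply Hvq, HRv).
  exists (r, c), (r', c'). split; [exists t; auto|]. split; [exists t'; auto|].
  split; [rewrite <- EQ; apply HQv|]. split.
  - intro Hin. apply HF in Hin. auto.
  - apply reach_mono with (S := out N).
    + intros v Hv Hin. apply HF in Hin. auto.
    + apply conv.
      * eapply rt_trans; [exact HA|]. apply HB; auto.
      * rewrite <- EQ. apply HQv.
      * rewrite <- ER. apply HRv.
Qed.

Lemma grid_no_antiray (Vx : P2 -> Prop) (A : P2 -> P2 -> Prop) (phi : P2 -> nat) (c : nat) :
  (forall u w, A u w -> phi u <= phi w) ->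
  (forall v, Vx v -> fst v <= phi v + c /\ snd v <= phi v + c) ->
  forall r, ~ is_antiray (Digraph P2 Vx A) r.
Proof.
  intros Hm Hb. apply (no_antiray (Digraph P2 Vx A) phi Hm).
  intros K. exists (box (K + c)). intros [a b] Hv HK. apply Hb in Hv. simpl in Hv.
  apply box_in; lia.
Qed.

Lemma grid_one_end (Vx : P2 -> Prop) (A : P2 -> P2 -> Prop) :
  (exists r, is_ray (Digraph P2 Vx A) r) ->
  (forall r, ~ is_antiray (Digraph P2 Vx A) r) ->
  (forall Q R, is_ray (Digraph P2 Vx A) Q -> is_ray (Digraph P2 Vx A) R -> ray_le (Digraph P2 Vx A) Q R) ->
  has_exactly_one_end (Digraph P2 Vx A).
Proof.
  intros [r Hr] Hna Hle. split.
  - exists r. left. auto.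
  - intros Q R [HQ|HQ] [HR|HR]; try (exfalso; eapply Hna; eauto; fail). split; auto.
Qed.

Ltac divfacts := repeat match goal with
 | |- context [?a / ?b] => let H := fresh in let H2 := fresh in
   pose proof (Nat.div_mod a b ltac:(lia)) as H; pose proof (Nat.mod_upper_bound a b ltac:(lia)) as H2;
   generalize dependent (a / b); generalize dependent (a mod b); intros
 end.


Definition Ed := arc descending_cdqg.

Lemma d_ray r x : 1 <= r -> 1 <= x -> Ed (r, x) (r, S x).
Proof. intros. unfold Ed; simpl. unfold qvx, ray_edge; simpl. split; [lia|split; [lia|left; lia]]. Qed.

Lemma d_diag i m : 1 <= i -> 1 <= m -> Ed (i + 1, 2 * m) (i, 2 * m + 1).
Proof.
  intros. unfold Ed; simpl. unfold qvx; simpl. split; [lia|split; [lia|]].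
  right; left. exists i, (2 * m). split; auto. split; [exists m; lia|auto].
Qed.

Lemma d_jump i : 1 <= i -> Ed (1, 2 * i) (i + 1, 1).
Proof.
  intros. unfold Ed; simpl. unfold qvx; simpl. split; [lia|split; [lia|]].
  right; right. exists i. auto.
Qed.

Lemma d_fwd N r c c' : 1 <= r -> 1 <= c -> c <= c' -> (forall x, c < x <= c' -> out N (r, x)) ->
  reachR Ed (out N) (r, c) (r, c').
Proof. apply row_fwd. intros; apply d_ray; auto. Qed.

Lemma d_descend N i k m : 1 <= i -> 1 <= m -> N < 2 * m ->
  reachR Ed (out N) (i + k, 2 * m) (i, 2 * m + 2 * k).
Proof.
  revert m. induction k as [|k IH]; intros m Hi Hm HN.
  - replace (i + 0) with i by lia. replace (2 * m + 2 * 0) with (2 * m) by lia. apply rt_refl.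
  - eapply rt_trans.
    + apply rt_step. split.
      * replace (i + S k) with (i + k + 1) by lia. apply d_diag; lia.
      * unfold out; simpl; lia.
    + eapply rt_trans.
      * apply rt_step. split; [apply d_ray; lia|unfold out; simpl; lia].
      * replace (S (2 * m + 1)) with (2 * (m + 1)) by lia.
        replace (2 * m + 2 * S k) with (2 * (m + 1) + 2 * k) by lia. apply IH; lia.
Qed.

Lemma d_stepA N : 1 <= N -> forall r c, qvx (r, c) -> out N (r, c) ->
  exists C, N < C /\ reachR Ed (out N) (r, c) (1, C).
Proof.
  intros HN r c [Hr Hc] Ho. unfold qvx in *; simpl in *.
  exists (2 * (c + N + 1) + 2 * (r - 1)). split; [lia|].
  eapply rt_trans.
  - apply (d_fwd N r c (2 * (c + N + 1))); try lia. intros x Hx. unfold out in *; simpl in *; lia.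
  - pose proof (d_descend N 1 (r - 1) (c + N + 1)) as H. replace (1 + (r - 1)) with r in H by lia.
    apply H; lia.
Qed.

Lemma d_stepB N C : 1 <= N -> N < C -> exists H, forall r c, qvx (r, c) -> out H (r, c) ->
  reachR Ed (out N) (1, C) (r, c).
Proof.
  intros HN HC. exists (3 * C + 5 * N + 10). intros r c [Hr Hc] Ho. unfold qvx, out in *; simpl in *.
  destruct (le_lt_dec (C + N + 2) r) as [Hrt|Hrt].
  - eapply rt_trans; [apply (d_fwd N 1 C (2 * (r - 1))); try lia; intros x Hx; unfold out; simpl; lia|].
    eapply rt_trans; [apply rt_step; split; [apply (d_jump (r - 1)); lia|unfold out; simpl; lia]|].
    replace (r - 1 + 1) with r by lia.
    apply d_fwd; try lia. intros x Hx; unfold out; simpl; lia.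
  - set (t := C + N + 2).
    eapply rt_trans; [apply (d_fwd N 1 C (2 * (t - 1))); try lia; intros x Hx; unfold out; simpl; lia|].
    eapply rt_trans; [apply rt_step; split; [apply (d_jump (t - 1)); lia|unfold out; simpl; lia]|].
    replace (t - 1 + 1) with t by lia.
    eapply rt_trans; [apply (d_fwd N t 1 (2 * (N + 1))); try lia; intros x Hx; unfold out; simpl; lia|].
    pose proof (d_descend N r (t - r) (N + 1)) as H. replace (r + (t - r)) with t in H by lia.
    eapply rt_trans; [apply H; lia|].
    apply d_fwd; try lia. intros x Hx; unfold out; simpl; lia.
Qed.

Lemma desc_one_end : has_exactly_one_end descending_cdqg.
Proof.
  apply grid_one_end.
  - exists (fun n => (1, n + 1)). split; [|split].
    + intros n. simpl. unfold qvx; simpl; lia.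
    + intros m n H. inversion H. lia.
    + intros n. simpl. replace (S n + 1) with (S (n + 1)) by lia. apply d_ray; lia.
  - apply (grid_no_antiray _ _ (fun v => 2 * fst v + 2 * ((snd v + 1) / 2)) 0).
    + intros [a b] [a' b'] [_ [_ [[H1 H2]|[[i [j [Hi [[k ->] [H1 H2]]]]]|[i [Hi [H1 H2]]]]]]];
        cbn [fst snd] in *; try (inversion H1; inversion H2; subst); divfacts; lia.
    + intros [a b] _. cbn [fst snd]. divfacts; lia.
  - intros Q R HQ HR. apply (grid_le qvx _ Ed); auto.
    + intros Sx u w H Hu Hw. unfold reachS. clear Hu Hw. induction H as [x y [Hxy Hs]| |].
      * apply rt_step. split; [exact Hxy|split; [apply Hxy|exact Hs]].
      * apply rt_refl.
      * eapply rt_trans; eauto.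
    + apply d_stepA.
    + apply d_stepB.
Qed.


Definition Ea := arc ascending_cdqg.

Lemma a_ray r x : 1 <= r -> 1 <= x -> Ea (r, x) (r, S x).
Proof. intros. unfold Ea; simpl. unfold qvx, ray_edge; simpl. split; [lia|split; [lia|left; lia]]. Qed.

Lemma a_up1 m : Ea (1, 2 * m + 1) (2, 2 * m + 1).
Proof.
  unfold Ea; simpl. unfold qvx; simpl. split; [lia|split; [lia|]].
  right; left. exists (2 * m + 1). split; [exists m; lia|auto].
Qed.

Lemma a_cross i m : 2 <= i -> Ea (i, 2 * m + 4) (i + 1, 2 * m + 1).
Proof.
  intros. unfold Ea; simpl. unfold qvx; simpl. split; [lia|split; [lia|]].
  right; right; left. exists i, (2 * m + 1). split; auto. split; [exists m; lia|].
  split; f_equal; lia.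
Qed.

Lemma a_jump i : 2 <= i -> Ea (i, 2) (1, 2 * (i - 1)).
Proof.
  intros. unfold Ea; simpl. unfold qvx; simpl. split; [lia|split; [lia|]].
  right; right; right. exists i. auto.
Qed.

Lemma a_fwd N r c c' : 1 <= r -> 1 <= c -> c <= c' -> (forall x, c < x <= c' -> out N (r, x)) ->
  reachR Ea (out N) (r, c) (r, c').
Proof. apply row_fwd. intros; apply a_ray; auto. Qed.

Lemma a_climb N k i m : 2 <= i ->
  (forall k', k' <= k -> N < i + k' \/ N < 2 * (m + k - k') + 1) ->
  reachR Ea (out N) (i, 2 * (m + k) + 1) (i + k, 2 * m + 1).
Proof.
  revert i. induction k as [|k IH]; intros i Hi HC.
  - replace (i + 0) with i by lia. replace (m + 0) with m by lia. apply rt_refl.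
  - eapply rt_trans.
    + apply rt_step. split; [apply a_ray; lia|]. specialize (HC 0). unfold out; simpl; lia.
    + eapply rt_trans.
      * apply rt_step. split.
        -- replace (S (2 * (m + S k) + 1)) with (2 * (m + k) + 4) by lia. apply a_cross; lia.
        -- specialize (HC 1). unfold out; simpl; lia.
      * replace (i + S k) with (i + 1 + k) by lia. apply IH; [lia|].
        intros k' Hk'. specialize (HC (S k')). lia.
Qed.

Lemma a_stepA N : 1 <= N -> forall r c, qvx (r, c) -> out N (r, c) ->
  exists C, N < C /\ reachR Ea (out N) (r, c) (1, C).
Proof.
  intros HN r c [Hr Hc] Ho. unfold qvx, out in *; simpl in *.
  destruct (Nat.eq_dec r 1) as [->|Hr1].
  - exists c. split; [lia|apply rt_refl].
  - set (m := c + 2 * N + 3).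
    exists (2 * (r + m - 1)). split; [lia|].
    eapply rt_trans; [apply (a_fwd N r c (2 * m + 1)); try lia; intros x Hx; unfold out; simpl; lia|].
    eapply rt_trans.
    + pose proof (a_climb N m r 0) as H. replace (2 * (0 + m) + 1) with (2 * m + 1) in H by lia.
      apply H; [lia|]. intros k' Hk'. lia.
    + eapply rt_trans; [apply rt_step; split; [apply a_ray; lia|unfold out; simpl; lia]|].
      apply rt_step. split; [apply a_jump; lia|unfold out; simpl; lia].
Qed.

Lemma a_stepB N C : 1 <= N -> N < C -> exists H, forall r c, qvx (r, c) -> out H (r, c) ->
  reachR Ea (out N) (1, C) (r, c).
Proof.
  intros HN HC. exists (C + 3 * N + 10). intros r c [Hr Hc] Ho. unfold qvx, out in *; simpl in *.
  destruct (Nat.eq_dec r 1) as [->|Hr1].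
  - apply a_fwd; try lia. intros x Hx; unfold out; simpl; lia.
  - assert (Hm : exists m0, 2 * m0 + 1 <= c <= 2 * m0 + 2).
    { exists ((c - 1) / 2). divfacts. lia. }
    destruct Hm as [m0 Hm0].
    set (k := r - 2).
    eapply rt_trans; [apply (a_fwd N 1 C (2 * (m0 + k) + 1)); try lia; intros x Hx; unfold out; simpl; lia|].
    eapply rt_trans; [apply rt_step; split; [apply a_up1|unfold out; simpl; lia]|].
    eapply rt_trans.
    + apply (a_climb N k 2 m0); [lia|]. intros k' Hk'. lia.
    + replace (2 + k) with r by lia. apply a_fwd; try lia. intros x Hx; unfold out; simpl; lia.
Qed.

Definition phi_a (v : P2) := if fst v =? 1 then snd v else 2 * fst v + 2 * ((snd v + 1) / 2) - 5.

Lemma asc_one_end : has_exactly_one_end ascending_cdqg.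
Proof.
  apply grid_one_end.
  - exists (fun n => (1, n + 1)). split; [|split].
    + intros n. simpl. unfold qvx; simpl; lia.
    + intros m n H. inversion H. lia.
    + intros n. simpl. replace (S n + 1) with (S (n + 1)) by lia. apply a_ray; lia.
  - apply (grid_no_antiray _ _ phi_a 5).
    + intros [a b] [a' b'] [[Ha Hb] [[Ha' Hb'] [[H1 H2]|[[j [[k ->] [H1 H2]]]|[[i [j [Hi [[k ->] [H1 H2]]]]]|[i [Hi [H1 H2]]]]]]]];
        unfold phi_a; cbn [fst snd] in *; try (inversion H1; inversion H2; subst);
        repeat match goal with |- context [?x =? ?y] => destruct (Nat.eqb_spec x y) end;
        divfacts; lia.
    + intros [a b] [Ha Hb]. unfold phi_a; cbn [fst snd] in *.
      destruct (Nat.eqb_spec a 1); divfacts; lia.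
  - intros Q R HQ HR. apply (grid_le qvx _ Ea); auto.
    + intros Sx u w H Hu Hw. unfold reachS. clear Hu Hw. induction H as [x y [Hxy Hs]| |].
      * apply rt_step. split; [exact Hxy|split; [apply Hxy|exact Hs]].
      * apply rt_refl.
      * eapply rt_trans; eauto.
    + apply a_stepA.
    + apply a_stepB.
Qed.


Definition Eb := bqg_pre_edge.

Lemma b_ray r x : 1 <= r -> 1 <= x -> Eb (r, x) (r, S x).
Proof. intros. unfold Eb, bqg_pre_edge, qvx, ray_edge; simpl. split; [lia|split; [lia|left; lia]]. Qed.

Lemma b_down i j u w : 1 <= i -> u = (i, 4 * j + 7) -> w = (i + 1, 4 * j + 1) -> Eb u w.
Proof.
  intros Hi -> ->. unfold Eb, bqg_pre_edge, qvx; simpl. split; [lia|split; [lia|]].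
  right; left. exists i, j. auto.
Qed.

Lemma b_up i j u w : 1 <= i -> u = (i + 1, 4 * j + 2) -> w = (i, 4 * j + 8) -> Eb u w.
Proof.
  intros Hi -> ->. unfold Eb, bqg_pre_edge, qvx; simpl. split; [lia|split; [lia|]].
  right; right. exists i, j. auto.
Qed.

Lemma b_fwd N r c c' : 1 <= r -> 1 <= c -> c <= c' -> (forall x, c < x <= c' -> out N (r, x)) ->
  reachR Eb (out N) (r, c) (r, c').
Proof. apply row_fwd. intros; apply b_ray; auto. Qed.

Lemma b_upk N k i j : 1 <= i -> N < 4 * j + 2 ->
  reachR Eb (out N) (i + k, 4 * j + 2) (i, 4 * (j + 2 * k) + 2).
Proof.
  revert j. induction k as [|k IH]; intros j Hi HN.
  - replace (i + 0) with i by lia. replace (j + 2 * 0) with j by lia. apply rt_refl.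
  - eapply rt_trans; [apply rt_step; split; [apply (b_up (i + k) j); [lia|f_equal; lia|reflexivity]|unfold out; simpl; lia]|].
    eapply rt_trans; [apply (b_fwd N (i + k) (4 * j + 8) (4 * (j + 2) + 2)); try lia; intros x Hx; unfold out; simpl; lia|].
    replace (4 * (j + 2 * S k) + 2) with (4 * ((j + 2) + 2 * k) + 2) by lia. apply IH; lia.
Qed.

Lemma b_downk N k i j : 1 <= i ->
  (forall k', k' <= k -> N < i + k' \/ N < 4 * (j + k - k') + 1) ->
  reachR Eb (out N) (i, 4 * (j + k) + 7) (i + k, 4 * j + 7).
Proof.
  revert i. induction k as [|k IH]; intros i Hi HC.
  - replace (i + 0) with i by lia. replace (j + 0) with j by lia. apply rt_refl.
  - eapply rt_trans; [apply rt_step; split; [apply (b_down i (j + S k)); [lia|f_equal; lia|reflexivity]|]|].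
    { specialize (HC 1). unfold out; simpl; lia. }
    eapply rt_trans; [apply (b_fwd N (i + 1) (4 * (j + S k) + 1) (4 * (j + k) + 7)); try lia; intros x Hx; specialize (HC 1); unfold out; simpl; lia|].
    replace (i + S k) with (i + 1 + k) by lia. apply IH; [lia|].
    intros k' Hk'. specialize (HC (S k')). lia.
Qed.

Lemma b_stepA N : 1 <= N -> forall r c, qvx (r, c) -> out N (r, c) ->
  exists C, N < C /\ reachR Eb (out N) (r, c) (1, C).
Proof.
  intros HN r c [Hr Hc] Ho. unfold qvx, out in *; simpl in *.
  set (j := c + N + 1).
  exists (4 * (j + 2 * (r - 1)) + 2). split; [lia|].
  eapply rt_trans; [apply (b_fwd N r c (4 * j + 2)); try lia; intros x Hx; unfold out; simpl; lia|].
  pose proof (b_upk N (r - 1) 1 j) as H. replace (1 + (r - 1)) with r in H by lia. apply H; lia.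
Qed.

Lemma b_stepB N C : 1 <= N -> N < C -> exists H, forall r c, qvx (r, c) -> out H (r, c) ->
  reachR Eb (out N) (1, C) (r, c).
Proof.
  intros HN HC. exists (C + 10 * N + 30). intros r c [Hr Hc] Ho. unfold qvx, out in *; simpl in *.
  destruct (Nat.eq_dec r 1) as [->|Hr1].
  - apply b_fwd; try lia. intros x Hx; unfold out; simpl; lia.
  - assert (Hm : exists j0, 4 * j0 + 1 <= c <= 4 * j0 + 4).
    { exists ((c - 1) / 4). divfacts. lia. }
    destruct Hm as [j0 Hj0].
    set (k := r - 2).
    eapply rt_trans; [apply (b_fwd N 1 C (4 * (j0 + k) + 7)); try lia; intros x Hx; unfold out; simpl; lia|].
    eapply rt_trans; [apply (b_downk N k 1 j0); [lia|intros k' Hk'; lia]|].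
    eapply rt_trans; [apply rt_step; split; [apply (b_down (1 + k) j0); [lia|reflexivity|reflexivity]|unfold out; simpl; lia]|].
    replace (1 + k + 1) with r by lia. apply b_fwd; try lia. intros x Hx; unfold out; simpl; lia.
Qed.

Lemma sw_extend E u v y : supp_walk E u v -> suppressible E v -> E v y -> supp_walk E u y.
Proof.
  intros H. induction H as [u v Huv|u v' v Huv' Hs Hw IH]; intros Hsv Hvy.
  - eapply sw_step; eauto. apply sw_one; auto.
  - eapply sw_step; eauto.
Qed.

Lemma supp_conv_aux (E : P2 -> P2 -> Prop) (Sx : P2 -> Prop)
  (HE : forall x y, E x y -> qvx x /\ qvx y) v w :
  clos_refl_trans_1n P2 (fun x y => E x y /\ Sx y) v w -> qvx w -> ~ suppressible E w ->
  forall u, qvx u -> ~ suppressible E u -> (u = v \/ (supp_walk E u v /\ suppressible E v)) ->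
  reachS (suppress E) Sx u w.
Proof.
  intros H. induction H as [v|v y w [Hvy HSy] _ IH]; intros Hw Hnw u Hu Hnu Hpend.
  - destruct Hpend as [->|[_ Hs]]; [apply rt_refl|contradiction].
  - destruct (HE _ _ Hvy) as [_ Hqy].
    assert (Hwalk : supp_walk E u y).
    { destruct Hpend as [->|[Hw' Hs]]; [apply sw_one; auto|eapply sw_extend; eauto]. }
    destruct (classic (suppressible E y)) as [Hsy|Hnsy].
    + apply IH; auto.
    + eapply rt_trans; [apply rt_step|apply IH; auto].
      { split; [|split]; simpl; auto; split; auto. }
      all: auto.
Qed.

Lemma supp_conv Sx u w : reachR Eb Sx u w -> qvx u /\ ~ suppressible Eb u ->
  qvx w /\ ~ suppressible Eb w -> reachS (suppress Eb) Sx u w.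
Proof.
  intros H [Hu Hnu] [Hw Hnw]. apply clos_rt_rt1n in H.
  eapply supp_conv_aux; eauto.
  intros x y [Hx [Hy _]]. auto.
Qed.

Lemma supp_walk_mono (phi : P2 -> nat) u w : (forall x y, Eb x y -> phi x <= phi y) ->
  supp_walk Eb u w -> phi u <= phi w.
Proof.
  intros Hm H. induction H as [u w H|u v w H _ _ IH]; [auto|]. apply Hm in H. lia.
Qed.

Lemma row2_nsupp c : 5 <= c -> ~ suppressible Eb (2, c).
Proof.
  intros Hc [_ [_ [_ Hn]]].
  pose proof (Nat.div_mod c 4 ltac:(lia)) as Hd. pose proof (Nat.mod_upper_bound c 4 ltac:(lia)) as Hb.
  set (q := c / 4) in *. set (rm := c mod 4) in *. clearbody q rm.
  assert (rm = 0 \/ rm = 1 \/ rm = 2 \/ rm = 3) as [Hr|[Hr|[Hr|Hr]]] by lia.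
  - assert (H : Eb (3, 4 * (q - 2) + 2) (2, c)) by (apply (b_up 2 (q - 2)); [lia|reflexivity|f_equal; lia]).
    specialize (Hn _ (or_introl H)). simpl in Hn. lia.
  - assert (H : Eb (1, 4 * q + 7) (2, c)) by (apply (b_down 1 q); [lia|reflexivity|f_equal; lia]).
    specialize (Hn _ (or_introl H)). simpl in Hn. lia.
  - assert (H : Eb (2, c) (1, 4 * q + 8)) by (apply (b_up 1 q); [lia|f_equal; lia|reflexivity]).
    specialize (Hn _ (or_intror H)). simpl in Hn. lia.
  - assert (H : Eb (2, c) (3, 4 * (q - 1) + 1)) by (apply (b_down 2 (q - 1)); [lia|f_equal; lia|f_equal; lia]).
    specialize (Hn _ (or_intror H)). simpl in Hn. lia.
Qed.

Lemma bqg_one_end : has_exactly_one_end bidirected_quarter_grid.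
Proof.
  unfold bidirected_quarter_grid, suppress. apply grid_one_end.
  - exists (fun n => (2, n + 5)). split; [|split].
    + intros n. simpl. split; [unfold qvx; simpl; lia|apply row2_nsupp; lia].
    + intros m n H. inversion H. lia.
    + intros n. simpl. split; [split; [unfold qvx; simpl; lia|apply row2_nsupp; lia]|].
      split; [split; [unfold qvx; simpl; lia|apply row2_nsupp; lia]|].
      apply sw_one. replace (S n + 5) with (S (n + 5)) by lia. apply b_ray; lia.
  - apply (grid_no_antiray _ _ (fun v => 6 * fst v + snd v) 0).
    + intros u w [_ [_ H]]. apply (supp_walk_mono (fun v => 6 * fst v + snd v)); auto.
      intros [a b] [a' b'] [_ [_ [[H1 H2]|[[i [j [Hi [H1 H2]]]]|[i [j [Hi [H1 H2]]]]]]]];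
        cbn [fst snd] in *; try (inversion H1; inversion H2; subst); lia.
    + intros [a b] _. cbn [fst snd]. lia.
  - intros Q R HQ HR. apply (grid_le _ _ Eb); auto.
    + intros Sx u w H Hu Hw. apply supp_conv; auto.
    + intros v [Hv _]. auto.
    + apply b_stepA.
    + apply b_stepB.
Qed.


Section Crd.
Variable D : digraph.
Local Notation V := (vtype D).
Variable R : nat -> nat -> V.
Variable P : list V -> Prop.
Hypothesis HR : forall i, is_ray D (R i).
Hypothesis Hdisj : forall i j m n, i <> j -> R i m <> R j n.
Hypothesis HPd : forall p q, P p -> P q -> p <> q -> disjoint_paths D p q.
Hypothesis Hinf : forall i i', i <> i' -> exists f : nat -> list V,
        (forall n, P (f n) /\ AB_dipath D (on D (R i)) (on D (R i')) (f n)) /\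
        (forall m n, f m = f n -> m = n).
Hypothesis Hstart : forall i, i <> 0 -> exists p l, P p /\
        AB_dipath D (on D (R 0)) (on D (R i)) p /\ p = l ++ [R i 0].
Hypothesis Hvx : forall v, vx D v -> (exists i n, R i n = v) \/ (exists p, P p /\ In v p).
Hypothesis Harc : forall u w, arc D u w ->
        (exists i n, u = R i n /\ w = R i (S n)) \/
        (exists p l1 l2, P p /\ p = l1 ++ u :: w :: l2).

Definition onray v := exists i n, R i n = v.

Lemma R_eq i j m n : R i m = R j n -> i = j /\ m = n.
Proof.
  intros H. destruct (Nat.eq_dec i j) as [->|Hne].
  - split; auto. destruct (HR j) as [_ [Hi _]]. auto.
  - exfalso. exact (Hdisj i j m n Hne H).
Qed.

Lemma bound_F (F : list V) : exists I B, forall i n, In (R i n) F -> i < I /\ n < B.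
Proof.
  induction F as [|a F [I [B HIB]]].
  - exists 0, 0. intros i n [].
  - destruct (classic (exists i n, R i n = a)) as [[i0 [n0 Ha]]|Hno].
    + exists (max I (S i0)), (max B (S n0)). intros i n [Hin|Hin].
      * rewrite Hin in Ha. apply R_eq in Ha. lia.
      * apply HIB in Hin. lia.
    + exists I, B. intros i n [Hin|Hin].
      * exfalso. apply Hno. eauto.
      * auto.
Qed.

Lemma roa_inj X : ray_or_antiray D X -> forall a b, X a = X b -> a = b.
Proof. intros [[_ [H _]]|[_ [H _]]]; auto. Qed.

Lemma roa_vx X : ray_or_antiray D X -> forall n, vx D (X n).
Proof. intros [[H _]|[H _]]; auto. Qed.

Lemma inf_ray X : ray_or_antiray D X -> forall t, exists t', t <= t' /\ onray (X t').
Proof.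
  intros HX t. apply NNPP. intro Hno.
  assert (Hn : forall t', t <= t' -> ~ onray (X t')) by (intros t' Ht' Ho; apply Hno; eauto).
  destruct (Hvx (X t) (roa_vx X HX t)) as [Ho|[p [Hp Hin]]].
  - apply (Hn t); auto.
  - assert (Hall : forall k, In (X (t + k)) p).
    { induction k as [|k IH].
      - rewrite Nat.add_0_r. auto.
      - rewrite Nat.add_succ_r.
        assert (Hadj : arc D (X (t + k)) (X (S (t + k))) \/ arc D (X (S (t + k))) (X (t + k))).
        { destruct HX as [[_ [_ Ha]]|[_ [_ Ha]]]; [left|right]; apply Ha. }
        assert (Hnk : ~ onray (X (t + k))) by (apply Hn; lia).
        assert (Hnk' : ~ onray (X (S (t + k)))) by (apply Hn; lia).
        destruct Hadj as [Ha|Ha]; apply Harc in Ha;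
          destruct Ha as [[i [n [Hu Hw]]]|[q [l1 [l2 [Hq Hql]]]]];
          try (exfalso; apply Hnk; exists i; eexists; symmetry; eauto; fail);
          (assert (Hin1 : In (X (t + k)) q) by (rewrite Hql; apply in_or_app; simpl; auto);
           assert (Hin2 : In (X (S (t + k))) q) by (rewrite Hql; apply in_or_app; simpl; auto);
           destruct (classic (p = q)) as [->|Hne]; [auto|exfalso; exact (HPd p q Hp Hq Hne _ IH Hin1)]). }
    apply (pig X p t (roa_inj X HX) Hall).
Qed.

Lemma cob (g : nat -> list V) (Hd : forall k k', k <> k' -> disjoint_paths D (g k) (g k')) L :
  exists K, forall k, K <= k -> forall v, In v (g k) -> ~ In v L.
Proof.
  induction L as [|a L [K HK]].
  - exists 0. intros k _ v _ [].
  - destruct (classic (exists k0, In a (g k0))) as [[k0 Hk0]|Hno].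
    + exists (max K (S k0)). intros k Hk v Hv [->|HvL].
      * exact (Hd k0 k ltac:(lia) v Hk0 Hv).
      * exact (HK k ltac:(lia) v Hv HvL).
    + exists K. intros k Hk v Hv [->|HvL].
      * apply Hno. eauto.
      * exact (HK k Hk v Hv HvL).
Qed.

Lemma pair_path i i' L : i <> i' -> exists p a e, P p /\
  AB_dipath D (on D (R i)) (on D (R i')) p /\ (forall v, In v p -> ~ In v L) /\
  (exists l, p = R i a :: l) /\ lastof D p (R i' e).
Proof.
  intros Hii. destruct (Hinf i i' Hii) as [f [Hf Hfi]].
  destruct (cob f) with (L := L) as [K HK].
  { intros k k' Hkk. apply HPd; try apply Hf. intro He. apply Hfi in He. auto. }
  destruct (Hf K) as [HP HAB].
  pose proof HAB as [_ [[x [l [Hp [[a Ha] _]]]] [l' [y [Hp' [[e He] _]]]]]].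
  exists (f K), a, e. split; auto. split; auto. split; [apply HK; auto|].
  split; [exists l; rewrite Ha; auto|exists l'; rewrite He; auto].
Qed.

Lemma seg S i a b : a <= b -> (forall x, a <= x <= b -> S (R i x)) -> reachS D S (R i a) (R i b).
Proof.
  intros Hab HS. induction Hab as [|b Hab IH].
  - apply rt_refl.
  - eapply rt_trans; [apply IH; intros; apply HS; lia|]. apply rt_step.
    destruct (HR i) as [Hv [_ Ha]]. split; [apply Ha|split; [apply Hv|apply HS; lia]].
Qed.

Lemma path_reach (S : V -> Prop) A B p x l y : AB_dipath D A B p -> (forall v, In v p -> S v) ->
  p = x :: l -> lastof D p y -> reachS D S x y.
Proof.
  intros [[_ [_ [Hv Hc]]] _] HS Hp Hl. subst p. apply (chain_reach D S l); [exact Hc| |exact Hl].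
  intros v Hin. split; auto.
Qed.

Lemma in_lastof (p : list V) y : lastof D p y -> In y p.
Proof. intros [l ->]. apply in_or_app. simpl; auto. Qed.

Lemma crd_le X Y : ray_or_antiray D X -> ray_or_antiray D Y -> ray_le D X Y.
Proof.
  intros HX HY. apply le_of_reach. intros F.
  set (Sv := fun v => ~ In v F).
  destruct (bound_F F) as [I [B HIB]].
  assert (good_of : forall i n, I <= i \/ B <= n -> forall n', n <= n' -> Sv (R i n')).
  { intros i n Hin n' Hn' Hf. apply HIB in Hf. lia. }
  set (Lbad := flat_map (fun i => map (R i) (seq 0 B)) (seq 0 I)).
  destruct (inf_avoid X onray (roa_inj X HX) (inf_ray X HX) Lbad) as [t [[i [n Hin]] Hnb]].
  assert (Hg : I <= i \/ B <= n).
  { destruct (le_lt_dec I i); auto. destruct (le_lt_dec B n); auto. exfalso. apply Hnb.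
    rewrite <- Hin. unfold Lbad. apply in_flat_map. exists i. split; [apply in_seq; lia|].
    apply in_map. apply in_seq; lia. }
  assert (Hhub : exists m, (forall m', m <= m' -> Sv (R 0 m')) /\ reachS D Sv (R i n) (R 0 m)).
  { destruct (Nat.eq_dec i 0) as [->|Hi0].
    - exists n. split; [apply good_of; auto|apply rt_refl].
    - destruct (pair_path i 0 (F ++ map (R i) (seq 0 n) ++ map (R 0) (seq 0 B)) Hi0)
        as [p [a [e [HP [HAB [Hav [[l Hl] Hla]]]]]]].
      assert (Ha : n <= a).
      { destruct (le_lt_dec n a); auto. exfalso. apply (Hav (R i a)); [rewrite Hl; simpl; auto|].
        apply in_or_app; right; apply in_or_app; left. apply in_map, in_seq; lia. }
      assert (He : B <= e).
      { destruct (le_lt_dec B e); auto. exfalso. apply (Hav (R 0 e)); [apply in_lastof; auto|].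
        apply in_or_app; right; apply in_or_app; right. apply in_map, in_seq; lia. }
      exists e. split; [apply good_of; auto|].
      eapply rt_trans; [apply seg; [exact Ha|intros x Hx; apply (good_of i n); [auto|lia]]|].
      eapply path_reach; [exact HAB| |exact Hl|exact Hla]. intros v Hv Hf. apply (Hav v Hv). apply in_or_app; auto. }
  destruct Hhub as [m [Hm Hreach]].
  assert (HYs : exists w, on D Y w /\ reachS D Sv (R 0 m) w).
  { destruct (classic (exists k, forall N0, exists t n, N0 <= n /\ Y t = R k n)) as [[k Hk]|Hnk].
    - destruct (Nat.eq_dec k 0) as [->|Hk0].
      + destruct (Hk m) as [t' [n' [Hn' Ht']]]. exists (R 0 n'). split; [exists t'; auto|].
        apply seg; [lia|]. intros x Hx; apply Hm; lia.
      + destruct (pair_path 0 k (F ++ map (R 0) (seq 0 m) ++ map (R k) (seq 0 B)) (not_eq_sym Hk0))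
          as [p [a [e [HP [HAB [Hav [[l Hl] Hla]]]]]]].
        assert (Ha : m <= a).
        { destruct (le_lt_dec m a); auto. exfalso. apply (Hav (R 0 a)); [rewrite Hl; simpl; auto|].
          apply in_or_app; right; apply in_or_app; left. apply in_map, in_seq; lia. }
        assert (He : B <= e).
        { destruct (le_lt_dec B e); auto. exfalso. apply (Hav (R k e)); [apply in_lastof; auto|].
          apply in_or_app; right; apply in_or_app; right. apply in_map, in_seq; lia. }
        destruct (Hk e) as [t' [n' [Hn' Ht']]]. exists (R k n'). split; [exists t'; auto|].
        eapply rt_trans; [apply seg; [exact Ha|intros x Hx; apply Hm; lia]|].
        eapply rt_trans; [eapply path_reach; [exact HAB| |exact Hl|exact Hla]; intros v Hv Hf; apply (Hav v Hv); apply in_or_app; auto|].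
        apply seg; [lia|]. intros x Hx. apply (good_of k e); [auto|lia].
    - assert (Hb : forall k, exists N0, forall t n, Y t = R k n -> n < N0).
      { intros k. apply NNPP. intro Hc. apply Hnk. exists k. intros N0. apply NNPP. intro Hc2.
        apply Hc. exists N0. intros t' n' Ht'. destruct (le_lt_dec N0 n'); auto. exfalso. apply Hc2. eauto. }
      destruct (choice _ Hb) as [Nf HNf].
      assert (Hfar : forall J, exists t i n, J <= i /\ Y t = R i n).
      { intros J. apply NNPP. intro Hno.
        assert (HM : exists M, forall i, i < J -> Nf i <= M).
        { clear Hno. induction J as [|J [M HM]]; [exists 0; lia|].
          exists (max M (Nf J)). intros i0 Hi0. destruct (Nat.eq_dec i0 J) as [->|]; [lia|].
          specialize (HM i0 ltac:(lia)). lia. }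
        destruct HM as [M HM].
        set (Lb := flat_map (fun i => map (R i) (seq 0 M)) (seq 0 J)).
        destruct (inf_avoid Y onray (roa_inj Y HY) (inf_ray Y HY) Lb) as [t' [[i' [n' Hin']] Hnb']].
        apply Hnb'. rewrite <- Hin'.
        assert (Hi' : i' < J) by (destruct (le_lt_dec J i'); auto; exfalso; apply Hno; eauto).
        assert (Hn' : n' < Nf i') by (apply (HNf i' t'); auto).
        specialize (HM i' Hi'). unfold Lb. apply in_flat_map. exists i'. split; [apply in_seq; lia|].
        apply in_map, in_seq; lia. }
      assert (Hst : forall j, exists p, P p /\ AB_dipath D (on D (R 0)) (on D (R (S j))) p /\ lastof D p (R (S j) 0)).
      { intros j. destruct (Hstart (S j) ltac:(lia)) as [p [l [Hp [HAB Hl]]]]. exists p. split; auto. split; auto.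
        exists l; auto. }
      destruct (choice _ Hst) as [s Hs].
      destruct (cob s) with (L := F ++ map (R 0) (seq 0 m)) as [K HK].
      { intros j j' Hjj. destruct (Hs j) as [Hp [_ Hl]]. destruct (Hs j') as [Hp' [_ Hl']].
        apply HPd; auto. intro He. rewrite He in Hl. destruct Hl as [l1 Hl1]. destruct Hl' as [l2 Hl2].
        rewrite Hl1 in Hl2. apply app_inj_tail in Hl2. destruct Hl2 as [_ Hl2].
        apply R_eq in Hl2. lia. }
      destruct (Hfar (S (I + K))) as [t' [i' [n' [Hi' Ht']]]].
      destruct (Hs (i' - 1)) as [Hp [HAB Hl]]. replace (S (i' - 1)) with i' in * by lia.
      pose proof HAB as [_ [[x [l [Hxl [[a Ha] _]]]] _]].
      assert (Ham : m <= a).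
      { destruct (le_lt_dec m a); auto. exfalso. apply (HK (i' - 1) ltac:(lia) (R 0 a)).
        - rewrite Hxl, Ha. simpl; auto.
        - apply in_or_app; right. apply in_map, in_seq; lia. }
      exists (R i' n'). split; [exists t'; auto|].
      eapply rt_trans; [apply seg; [exact Ham|intros y Hy; apply Hm; lia]|].
      eapply rt_trans; [eapply path_reach; [exact HAB|intros v Hv Hf; apply (HK (i' - 1) ltac:(lia) v Hv); apply in_or_app; auto|rewrite Hxl, Ha; reflexivity|exact Hl]|].
      apply seg; [lia|]. intros y Hy. apply (good_of i' 0); auto; lia. }
  destruct HYs as [w [HYw Hw]].
  exists (R i n), w. split; [exists t; auto|]. split; auto. split; [rewrite Hin; apply roa_vx; auto|].
  split; [apply (good_of i n Hg n); auto|].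
  eapply rt_trans; eauto.
Qed.

End Crd.

Lemma crd_one_end (D : digraph) : is_complete_ray_digraph D -> has_exactly_one_end D.
Proof.
  intros [R [P [HR [Hdisj [_ [HPd [Hinf [Hstart [Hvx Harc]]]]]]]]]. split.
  - exists (R 0). left. apply HR.
  - intros Q Q' HQ HQ'. split; eapply crd_le; eauto.
Qed.

Theorem lemma4p1 :
  has_exactly_one_end bidirected_quarter_grid /\
  has_exactly_one_end ascending_cdqg /\
  has_exactly_one_end descending_cdqg /\
  (forall D : digraph, is_complete_ray_digraph D -> has_exactly_one_end D).
Proof.
  split; [exact bqg_one_end|split; [exact asc_one_end|split; [exact desc_one_end|exact crd_one_end]]].
Qed.
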